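(* Let $(X,d)$ be a finite ultrametric space. Then for every $\varepsilon>0$ there exists $(Y,\rho)\in\mathfrak U$ such that $|X|=|Y|$ and $d_{GH}(\operatorname{is}(X),\operatorname{is}(Y))<\varepsilon$.
   Context: $\operatorname{Sp}(X)=\{d(x,y):x\neq y\}$; $\mathfrak U$ is the class of finite ultrametric spaces $X$ with $|\operatorname{Sp}(X)|=|X|-1$. $\operatorname{is}(X)$ denotes the isometry type of $X$. For bounded metric spaces $X,Y$ and $\varepsilon>0$, $d_{GH}(\operatorname{is}(X),\operatorname{is}(Y))<\varepsilon$ iff there is a metric space $(Z,d_Z)$ with subspaces $X',Y'$ isometric to $X,Y$ such that each point of $X'$ lies at $d_Z$-distance $<\varepsilon$ from some point of $Y'$ and each point of $Y'$ lies at distance $<\varepsilon$ from some point of $X'$. *)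

(* Defs.v *)
From HB Require Import structures.
From mathcomp Require Import all_boot all_order all_algebra.
From mathcomp Require Import reals.
Set Implicit Arguments. Unset Strict Implicit. Unset Printing Implicit Defensive.
Import Order.TTheory GRing.Theory Num.Theory.
Local Open Scope ring_scope.

Definition is_metric (R : realType) (T : Type) (d : T -> T -> R) : Prop :=
  [/\ forall x y, 0 <= d x y,
      forall x y, d x y = 0 <-> x = y,
      forall x y, d x y = d y x &
      forall x y z, d x z <= d x y + d y z].

Definition is_ultrametric (R : realType) (T : Type) (d : T -> T -> R) : Prop :=
  is_metric d /\ forall x y z, d x z <= Num.max (d x y) (d y z).

Definition spectrum (R : realType) (T : finType) (d : T -> T -> R) : seq R :=
  undup [seq d p.1 p.2 | p <- enum [pred p : T * T | p.1 != p.2]].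

(* (T,d) belongs to the class U: finite ultrametric with |Sp(X)| = |X| - 1
   (stated as |Sp(X)| + 1 = |X|, so that the empty space is not in U). *)
Definition in_classU (R : realType) (T : finType) (d : T -> T -> R) : Prop :=
  is_ultrametric d /\ (size (spectrum d)).+1 = #|T|.

(* d_GH(is(X), is(Y)) < eps, via the characterization in the paper:
   a metric space Z with isometric copies X' = f(X), Y' = g(Y) that are
   mutually eps-close. *)
Definition dGH_lt (R : realType) (TX TY : Type)
  (dX : TX -> TX -> R) (dY : TY -> TY -> R) (eps : R) : Prop :=
  exists (Z : Type) (dZ : Z -> Z -> R) (f : TX -> Z) (g : TY -> Z),
    [/\ is_metric dZ,
        forall a b, dZ (f a) (f b) = dX a b,
        forall a b, dZ (g a) (g b) = dY a b,
        forall a, exists b, dZ (f a) (g b) < eps &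
        forall b, exists a, dZ (f a) (g b) < eps].

(* Main.v *)
Require Import Defs.
From HB Require Import structures.
From mathcomp Require Import all_boot all_order all_algebra.
From mathcomp Require Import reals.
From mathcomp Require Import lra.
Import Order.TTheory GRing.Theory Num.Theory.
Local Open Scope ring_scope.

Lemma gap_exists (R : realType) (T : finType) (f : T -> R) :
  exists2 G : R, 0 < G & forall s t, f s < f t -> f s + G <= f t.
Proof.
exists (\big[Order.min/1]_(p : T * T | f p.1 < f p.2) (f p.2 - f p.1)).
  apply: (big_ind (fun x : R => 0 < x)) => //.
    by move=> x y hx hy; rewrite lt_min hx hy.
  by move=> p hp; rewrite subr_gt0.
move=> s t hst.
rewrite -lerBrDl.
rewrite (bigD1 (s, t)) //=.
by rewrite ge_min lexx.
Qed.

Lemma size_undup_map (T U V : eqType) (f : T -> U) (g : T -> V) (s : seq T) :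
  {in s &, forall p q, (f p == f q) = (g p == g q)} ->
  size (undup (map f s)) = size (undup (map g s)).
Proof.
elim: s => [|a s IH] //= H.
have H' : {in s &, forall p q, (f p == f q) = (g p == g q)}.
  by move=> p q hp hq; apply: H; rewrite inE ?hp ?hq orbT.
have -> : (f a \in map f s) = (g a \in map g s).
  apply/mapP/mapP => -[q hq e]; exists q => //; apply/eqP.
    by rewrite -H ?inE ?eqxx ?hq ?orbT // e.
  by rewrite H ?inE ?eqxx ?hq ?orbT // e.
by case: (_ \in _) => /=; rewrite IH.
Qed.

Section Main.
Variable R : realType.
Variable X : finType.
Variable d : X -> X -> R.
Hypothesis hd : is_ultrametric d.

Lemma d_ge0 x y : 0 <= d x y. Proof. by case: hd => -[]. Qed.
Lemma d_eq0 x y : d x y = 0 <-> x = y. Proof. by case: hd => -[]. Qed.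
Lemma d_sym x y : d x y = d y x. Proof. by case: hd => -[]. Qed.
Lemma d_ult x y z : d x z <= Num.max (d x y) (d y z). Proof. by case: hd. Qed.
Lemma d_xx x : d x x = 0. Proof. by apply/d_eq0. Qed.
Lemma d_gt0 x y : x != y -> 0 < d x y.
Proof.
move=> nxy; rewrite lt_neqAle d_ge0 andbT eq_sym; apply/eqP => /d_eq0 h.
by rewrite h eqxx in nxy.
Qed.

Lemma ball_trans x y z r : d x y < r -> d y z < r -> d x z < r.
Proof. by move=> h1 h2; apply: le_lt_trans (d_ult x y z) _; rewrite gt_max h1. Qed.

Definition idx (x : X) : nat := enum_rank x.
Definition amin (x : X) (r : R) : X := [arg min_(z < x | d x z < r) idx z].

Lemma idx_inj x y : idx x = idx y -> x = y.
Proof. by move=> h; apply: enum_rank_inj; apply: val_inj. Qed.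

Lemma idx_lt x : (idx x < #|X|)%N.
Proof. by rewrite /idx; case: (enum_rank x) => /= m; rewrite cardE. Qed.

Lemma amin_in x r : 0 < r -> d x (amin x r) < r.
Proof.
move=> r0; rewrite /amin; case: arg_minnP => //; by rewrite d_xx.
Qed.

Lemma amin_min x r z : d x z < r -> (idx (amin x r) <= idx z)%N.
Proof.
move=> hz; have r0 : 0 < r by apply: le_lt_trans hz; apply: d_ge0.
rewrite /amin; case: arg_minnP; first by rewrite d_xx.
by move=> i _ /(_ z hz).
Qed.

Lemma amin_ball x y r : d x y < r -> idx (amin x r) = idx (amin y r).
Proof.
move=> hxy; have r0 : 0 < r by apply: le_lt_trans hxy; apply: d_ge0.
apply/eqP; rewrite eqn_leq; apply/andP; split; apply: amin_min.
  by apply: ball_trans hxy _; apply: amin_in.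
by rewrite d_sym in hxy; apply: ball_trans hxy _; apply: amin_in.
Qed.

Arguments d_gt0 {x y}.
Arguments ball_trans {x y z r}.
Arguments amin_in x {r}.
Arguments amin_min {x r z}.
Arguments amin_ball {x y r}.
Definition K (x y : X) : nat :=
  maxn (idx (amin x (d x y))) (idx (amin y (d x y))).

Lemma K_sym x y : K x y = K y x.
Proof. by rewrite /K d_sym maxnC. Qed.

Lemma amin_neq x y : x != y ->
  idx (amin x (d x y)) != idx (amin y (d x y)).
Proof.
move=> nxy; apply/negP => /eqP /idx_inj h.
have r0 := d_gt0 nxy.
have h1 := amin_in x r0; have h2 := amin_in y r0.
rewrite -h d_sym in h2.
by have := ball_trans h1 h2; rewrite ltxx.
Qed.

Arguments amin_neq {x y}.
Lemma K_bounds x y : x != y -> (0 < K x y < #|X|)%N.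
Proof.
move=> nxy; have := amin_neq nxy; rewrite /K.
rewrite gtn_max !idx_lt andbT.
case: (idx _) => [|a]; case: (idx _) => [|b] //= _.
by rewrite andbT leq_max.
Qed.

Lemma K_char x y : x != y -> exists u, [/\ idx u = K x y,
   (exists w, (idx w < K x y)%N /\ d u w = d x y) &
   (forall w, (idx w < K x y)%N -> d x y <= d u w)].
Proof.
wlog le : x y / (idx (amin y (d x y)) <= idx (amin x (d x y)))%N.
  move=> W nxy.
  case: (leqP (idx (amin y (d x y))) (idx (amin x (d x y)))) => h; first exact: W.
  have le' : (idx (amin x (d y x)) <= idx (amin y (d y x)))%N.
    by rewrite d_sym ltnW.
  have nyx : y != x by rewrite eq_sym.
  have [u [h1 h2 h3]] := W y x le' nyx.
  by exists u; rewrite K_sym d_sym; split.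
move=> nxy.
have r0 := d_gt0 nxy.
set r := d x y in r0 le *.
have Kx : K x y = idx (amin x r) by rewrite /K (maxn_idPl le).
have lt : (idx (amin y r) < idx (amin x r))%N.
  by rewrite ltn_neqAle le andbT eq_sym; apply: amin_neq.
set u := amin x r; set w := amin y r.
have hu : d x u < r by apply: amin_in.
have hw : d y w < r by apply: amin_in.
have duy : d u y = r.
  apply/eqP; rewrite eq_le; apply/andP; split.
    by apply: le_trans (d_ult u x y) _; rewrite ge_max d_sym (ltW hu) lexx.
  rewrite leNgt; apply/negP => h.
  by have := ball_trans hu h; rewrite ltxx.
exists u; rewrite Kx; split => //.
  exists w; split => //.
  apply/eqP; rewrite eq_le; apply/andP; split.
    by apply: le_trans (d_ult u y w) _; rewrite ge_max duy lexx (ltW hw).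
  rewrite leNgt; apply/negP => h.
  rewrite d_sym in hw.
  by have := ball_trans h hw; rewrite duy ltxx.
move=> z hz; rewrite leNgt; apply/negP => h.
have := amin_min (ball_trans hu h); rewrite -/u.
by rewrite leqNgt hz.
Qed.

Arguments K_char {x y}.
Lemma K_det x y x' y' : x != y -> x' != y' -> K x y = K x' y' ->
  d x y = d x' y'.
Proof.
move=> n1 n2 hK.
have [u [u1 [w [w1 w2]] u3]] := K_char n1.
have [u' [u1' [w' [w1' w2']]] u3'] := K_char n2.
have uu : u = u' by apply: idx_inj; rewrite u1 u1'.
subst u'.
apply/eqP; rewrite eq_le; apply/andP; split.
  by rewrite -w2'; apply: u3; rewrite hK.
by rewrite -w2; apply: u3'; rewrite -hK.
Qed.

Lemma K_surj k : (0 < k < #|X|)%N -> exists x y, x != y /\ K x y = k.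
Proof.
case/andP=> k0 kn.
have n0 : (0 < #|X|)%N by apply: leq_trans kn.
set x := enum_val (Ordinal kn : 'I_#|X|).
set x0 := enum_val (Ordinal n0 : 'I_#|X|).
have ix : idx x = k by rewrite /idx /x enum_valK.
have ix0 : idx x0 = 0%N by rewrite /idx /x0 enum_valK.
have P0 : (idx x0 < k)%N by rewrite ix0.
case: (@arg_minP _ _ _ x0 (fun w => (idx w < k)%N) (fun w => d x w) P0).
move=> y hy ymin.
have nxy : x != y by apply/negP => /eqP e; rewrite -e ix ltnn in hy.
exists x, y; split => //.
have r0 := d_gt0 nxy.
have ax : idx (amin x (d x y)) = k.
  apply/eqP; rewrite eqn_leq; apply/andP; split.
    by rewrite -ix; apply: amin_min; rewrite d_xx.
  rewrite leqNgt; apply/negP => h.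
  have := ymin _ h; have := amin_in x r0.
  by move=> h1 h2; have := le_lt_trans h2 h1; rewrite ltxx.
have ay : (idx (amin y (d x y)) < k)%N.
  by apply: leq_ltn_trans hy; apply: amin_min; rewrite d_xx.
by rewrite /K ax (maxn_idPl (ltnW ay)).
Qed.

Variable delta : R.
Hypothesis delta0 : 0 < delta.
Hypothesis hgap : forall a b a' b', d a b < d a' b' ->
  d a b + delta * (#|X|)%:R <= d a' b'.

Definition rho (x y : X) : R :=
  if x == y then 0 else d x y + delta * (K x y)%:R.

Arguments K_bounds {x y}.
Lemma rhoE x y : x != y -> rho x y = d x y + delta * (K x y)%:R.
Proof. by rewrite /rho => /negPf ->. Qed.

Arguments rhoE {x y}.
Lemma rho_xx x : rho x x = 0.
Proof. by rewrite /rho eqxx. Qed.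

Lemma d_le_rho x y : d x y <= rho x y.
Proof.
case: (eqVneq x y) => [->|nxy]; first by rewrite rho_xx d_xx.
by rewrite rhoE // lerDl mulr_ge0 // ltW.
Qed.

Lemma rho_ge0 x y : 0 <= rho x y.
Proof. exact: le_trans (d_ge0 x y) (d_le_rho x y). Qed.

Lemma rho_lt x y : x != y -> rho x y < d x y + delta * (#|X|)%:R.
Proof.
move=> nxy; rewrite rhoE // ltrD2l ltr_pM2l // ltr_nat.
by case/andP: (K_bounds nxy).
Qed.

Arguments rho_lt {x y}.
Lemma rho_le x y : rho x y <= d x y + delta * (#|X|)%:R.
Proof.
case: (eqVneq x y) => [->|nxy]; last exact: ltW (rho_lt nxy).
by rewrite rho_xx d_xx add0r mulr_ge0 // ltW.
Qed.

Lemma rho_sym x y : rho x y = rho y x.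
Proof.
case: (eqVneq x y) => [->//|nxy].
have nyx : y != x by rewrite eq_sym.
by rewrite (rhoE nxy) (rhoE nyx) d_sym K_sym.
Qed.

Lemma rho_eq0 x y : rho x y = 0 <-> x = y.
Proof.
split; last by move=> ->; rewrite rho_xx.
case: (eqVneq x y) => // nxy h.
have := d_gt0 nxy; have := d_le_rho x y; rewrite h => h1 h2.
by have := le_lt_trans h1 h2; rewrite ltxx.
Qed.

Lemma rho_mono x y x' y' : x != y -> x' != y' -> d x y = d x' y' ->
  (K x y <= K x' y')%N -> rho x y <= rho x' y'.
Proof.
move=> n1 n2 e hK; rewrite !rhoE // e lerD2l ler_wpM2l ?ler_nat //.
exact: ltW.
Qed.

Lemma rho_ult x y z : rho x z <= Num.max (rho x y) (rho y z).
Proof.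
case: (eqVneq x z) => [->|nxz].
  by rewrite rho_xx le_max rho_ge0.
case: (eqVneq x y) => [<-|nxy].
  by rewrite rho_xx le_max lexx orbT.
case: (eqVneq y z) => [->|nyz].
  by rewrite rho_xx le_max lexx.
case: (ltP (d x z) (d x y)) => h1.
  rewrite le_max; apply/orP; left.
  apply: (le_trans (ltW (rho_lt nxz))).
  by apply: le_trans (hgap _ _ _ _ h1) (d_le_rho _ _).
case: (ltP (d x z) (d y z)) => h2.
  rewrite le_max; apply/orP; right.
  apply: (le_trans (ltW (rho_lt nxz))).
  by apply: le_trans (hgap _ _ _ _ h2) (d_le_rho _ _).
have hr : (d x z) <= Num.max (d x y) (d y z) by apply: d_ult.
have Kxz : K x z = maxn (idx (amin x (d x z))) (idx (amin z (d x z))) by [].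
case: (eqVneq (d x y) (d x z)) => exy; last first.
  have lxy : d x y < (d x z) by rewrite lt_neqAle exy h1.
  have eyz : d y z = (d x z).
    apply/eqP; rewrite eq_le h2 /=.
    by move: hr; rewrite le_max leNgt lxy.
  rewrite le_max; apply/orP; right.
  apply: rho_mono => //.
  by rewrite Kxz /K eyz (amin_ball lxy).
case: (eqVneq (d y z) (d x z)) => eyz; last first.
  have lyz : d y z < (d x z) by rewrite lt_neqAle eyz h2.
  rewrite le_max; apply/orP; left.
  apply: rho_mono => //; try by rewrite exy.
  by rewrite Kxz /K exy (amin_ball lyz).
have Kxy : K x y = maxn (idx (amin x (d x z))) (idx (amin y (d x z))) by rewrite /K exy.
have Kyz : K y z = maxn (idx (amin y (d x z))) (idx (amin z (d x z))) by rewrite /K eyz.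
rewrite le_max; apply/orP.
case: (leqP (idx (amin x (d x z))) (idx (amin z (d x z)))) => hxz.
  right; apply: rho_mono => //; try by rewrite eyz.
  by rewrite Kxz Kyz (maxn_idPr hxz) leq_maxr.
left; apply: rho_mono => //; try by rewrite exy.
by rewrite Kxz Kxy (maxn_idPl (ltnW hxz)) leq_maxl.
Qed.

Lemma rho_eqK x y x' y' : x != y -> x' != y' ->
  (rho x y == rho x' y') = (K x y == K x' y').
Proof.
move=> n1 n2; apply/eqP/eqP => h; last first.
  by rewrite (rhoE n1) (rhoE n2) h (K_det _ _ _ _ n1 n2 h).
have ed : d x y = d x' y'.
  case: (ltgtP (d x y) (d x' y')) => // c.
    have := lt_le_trans (rho_lt n1) (le_trans (hgap _ _ _ _ c) (d_le_rho _ _)).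
    by rewrite h ltxx.
  have := lt_le_trans (rho_lt n2) (le_trans (hgap _ _ _ _ c) (d_le_rho _ _)).
  by rewrite h ltxx.
move: h; rewrite (rhoE n1) (rhoE n2) ed => /addrI /mulfI.
have dn : delta != 0 by rewrite gt_eqF.
by move=> /(_ dn) /eqP; rewrite eqr_nat => /eqP.
Qed.

Lemma spectrum_size : (0 < #|X|)%N -> (size (spectrum rho)).+1 = #|X|.
Proof.
move=> n0.
rewrite /spectrum.
set E := enum _.
have memE p : (p \in E) = (p.1 != p.2) by rewrite /E mem_enum.
rewrite (@size_undup_map _ _ _ _ (fun p => K p.1 p.2)); last first.
  by move=> p q; rewrite !memE => hp hq; apply: rho_eqK.
have P : perm_eq (undup [seq K p.1 p.2 | p <- E]) (iota 1 #|X|.-1).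
  apply: uniq_perm; [exact: undup_uniq | exact: iota_uniq |].
  move=> k; rewrite mem_undup mem_iota add1n (prednK n0).
  apply/mapP/idP.
    by case=> p; rewrite memE => hp ->; apply: K_bounds.
  by move=> /K_surj [x [y [nxy <-]]]; exists (x, y); rewrite ?memE.
by rewrite (perm_size P) size_iota (prednK n0).
Qed.

End Main.

Definition dZ (R : realType) (X : Type) (d rho : X -> X -> R) (c : R)
  (u v : X + X) : R :=
  match u, v with
  | inl a, inl b => d a b
  | inr a, inr b => rho a b
  | inl a, inr b => d a b + c
  | inr a, inl b => d b a + c
  end.

Arguments dZ {R X}.
Lemma dZ_metric (R : realType) (X : Type) (d rho : X -> X -> R) (c : R) :
  is_metric d -> is_metric rho -> 0 < c ->
  (forall a b, d a b <= rho a b) -> (forall a b, rho a b <= d a b + c) ->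
  is_metric (dZ d rho c).
Proof.
move=> [d0 de ds dt] [r0 re rs rt] c0 dr rd.
split.
- by case=> a; case=> b /=; rewrite ?d0 ?r0 // addr_ge0 // ltW.
- case=> a; case=> b /=; split.
  + by move/de => ->.
  + by case=> /de.
  + move=> e; exfalso; have := d0 a b; lra.
  + by [].
  + move=> e; exfalso; have := d0 b a; lra.
  + by [].
  + by move/re => ->.
  + by case=> /re.
- by case=> a; case=> b /=; rewrite 1?ds 1?rs.
- case=> a; case=> b; case=> e /=;
  have := dt a b e; have := dt e b a; have := ds a b; have := ds a e; have := ds b e;
  have := dr a b; have := dr b e; have := dr a e; have := rd a b; have := rd b e; have := rd a e;
  have := rs a b; have := rs b e; have := rs a e; have := rt a b e;
  have := d0 a b; have := d0 b e; have := d0 a e; lra.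
Qed.

Theorem mainTheorem16 (R : realType) (X : finType) (d : X -> X -> R) :
  is_ultrametric d -> (0 < #|X|)%N ->
  forall eps : R, 0 < eps ->
  exists (Y : finType) (rho : Y -> Y -> R),
    [/\ in_classU rho, #|X| = #|Y| & dGH_lt d rho eps].
Proof.
move=> hd n0 eps eps0.
have [G G0 hG] := @gap_exists R _ (fun p : X * X => d p.1 p.2).
pose m := Order.min G eps.
have m0 : 0 < m by rewrite lt_min G0 eps0.
have mG : m <= G by rewrite ge_min lexx.
have me : m <= eps by rewrite ge_min lexx orbT.
pose N : R := (#|X|)%:R.
have N0 : 0 < N by rewrite ltr0n.
pose delta := m / (N + 1).
have delta0 : 0 < delta by rewrite divr_gt0 // ltr_wpDr // ltW.
have dm : delta * (N + 1) = m by rewrite /delta divfK // gt_eqF // ltr_wpDr // ltW.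
have dN : delta * N < m by move: dm; rewrite mulrDr mulr1 => dm; lra.
have dN0 : 0 < delta * N by rewrite mulr_gt0.
have hgap : forall a b a' b', d a b < d a' b' ->
    d a b + delta * (#|X|)%:R <= d a' b'.
  move=> a b a' b' h; have := hG (a, b) (a', b') h => /= h2.
  rewrite -/N; lra.
pose r := @rho R X d delta.
have rm : is_metric r.
  split.
  - by move=> x y; apply: rho_ge0.
  - by move=> x y; apply: rho_eq0.
  - by move=> x y; apply: rho_sym.
  - move=> x y z.
    have hu : r x z <= Num.max (r x y) (r y z) by apply: rho_ult.
    apply: le_trans hu _.
    have h1 : 0 <= r x y by apply: rho_ge0.
    have h2 : 0 <= r y z by apply: rho_ge0.
    move: h1 h2.
    rewrite ge_max; move=> h1 h2; apply/andP; split; lra.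
exists X, r; split => //.
  split; first by split => // x y z; apply: rho_ult.
  by apply: spectrum_size.
exists (X + X)%type, (dZ d r (delta * N)), inl, inr; split => //.
- apply: dZ_metric => //.
  + by case: hd.
  + by move=> a b; apply: d_le_rho.
  + by move=> a b; apply: rho_le.
- move=> a; exists a => /=.
  rewrite (@d_xx R X d hd a); lra.
- move=> b; exists b => /=.
  rewrite (@d_xx R X d hd b); lra.
Qed.
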